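(* Let $\underline x\in[0,1]^n$, and let $c_1,c_2$ be two parity checks (binary vectors of length $n$) with neighborhoods $N_1,N_2\subseteq\{1,\dots,n\}$ such that all parity-check constraints of $c_1$ and of $c_2$ are satisfied by $\underline x$. Let $c=c_1\oplus c_2$ be their modulo-2 sum, whose neighborhood is $N=(N_1\cup N_2)\setminus(N_1\cap N_2)$. If $c$ generates a cut at $\underline x$ (i.e. some parity-check constraint of $c$ is violated at $\underline x$), then $N_1\cap N_2$ contains at least two indices $i$ with $0<x_i<1$.
   Context: The neighborhood of a parity check $c\in\{0,1\}^n$ is $\{i: c_i=1\}$. The parity-check constraints of a check with neighborhood $N$ are $\sum_{i\in V}x_i-\sum_{i\in N\setminus V}x_i\le |V|-1$ for all odd-sized $V\subseteq N$. A check generates a cut at $\underline x$ if one of its parity-check constraints is violated at $\underline x$. *)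

(* Defs.v *)
From mathcomp Require Import all_boot all_order all_algebra.
Set Implicit Arguments. Unset Strict Implicit. Unset Printing Implicit Defensive.
Import Order.TTheory GRing.Theory Num.Theory.
Local Open Scope ring_scope.

Definition nbhd (n : nat) (c : 'I_n -> bool) : {set 'I_n} := [set i | c i].

Definition check_add (n : nat) (c1 c2 : 'I_n -> bool) : 'I_n -> bool :=
  fun i => xorb (c1 i) (c2 i).

Definition pc_constraint (R : numDomainType) (n : nat) (N V : {set 'I_n})
  (x : 'I_n -> R) : bool :=
  \sum_(i in V) x i - \sum_(i in N :\: V) x i <= (#|V|%:R - 1).

Definition satisfies_check (R : numDomainType) (n : nat) (c : 'I_n -> bool)
  (x : 'I_n -> R) : Prop :=
  forall V : {set 'I_n}, V \subset nbhd c -> odd #|V| ->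
    pc_constraint (nbhd c) V x.

Definition generates_cut (R : numDomainType) (n : nat) (c : 'I_n -> bool)
  (x : 'I_n -> R) : Prop :=
  exists V : {set 'I_n}, [/\ V \subset nbhd c, odd #|V| &
    ~~ pc_constraint (nbhd c) V x].

(* Main.v *)
Require Import Defs.
From mathcomp Require Import all_boot all_order all_algebra.
From mathcomp Require Import lra.
Set Implicit Arguments. Unset Strict Implicit. Unset Printing Implicit Defensive.
Import Order.TTheory GRing.Theory Num.Theory.
Local Open Scope ring_scope.

Definition hh (R : numDomainType) n (x : 'I_n -> R) (N U : {set 'I_n}) i : R :=
  if i \in U then x i - 1 else if i \in N then - x i else 0.

Lemma sumg (R : realFieldType) n (x : 'I_n -> R) (N U : {set 'I_n}) :
  \sum_(i in U) x i - \sum_(i in N :\: U) x i - #|U|%:R = \sum_i hh x N U i.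
Proof.
rewrite -sumr_const (big_mkcond (mem U)) (big_mkcond (mem (N :\: U))).
rewrite (big_mkcond (mem U) (fun _ => 1)) -!sumrB; apply: eq_bigr => i _.
rewrite /hh !inE; case: (i \in U); case: (i \in N) => /=; lra.
Qed.

Lemma bound (R : realFieldType) n (x : 'I_n -> R) c (U : {set 'I_n}) :
  (forall i, 0 <= x i <= 1) -> satisfies_check c x -> U \subset nbhd c ->
  \sum_i hh x (nbhd c) U i <= - (odd #|U|)%:R.
Proof.
move=> hx hc hU; rewrite -sumg.
case hodd: (odd #|U|).
  have := hc U hU hodd; rewrite /pc_constraint /= => H; lra.
have A : \sum_(i in U) x i <= \sum_(i in U) (1 : R).
  by apply: ler_sum => i _; case/andP: (hx i).
have B : 0 <= \sum_(i in nbhd c :\: U) x i.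
  by apply: sumr_ge0 => i _; case/andP: (hx i).
rewrite sumr_const in A; rewrite /=; lra.
Qed.

Lemma card_sum n (A : {set 'I_n}) : #|A| = (\sum_i (i \in A : nat))%N.
Proof. by rewrite -sum1_card big_mkcond. Qed.

Lemma card_sumR (R : numDomainType) n (A : {set 'I_n}) :
  #|A|%:R = \sum_i ((i \in A : nat)%:R : R).
Proof. by rewrite card_sum natr_sum. Qed.

Lemma parity (a1 a2 o f : nat) (b : bool) : b = ~~ odd (a1 + o) ->
  odd (a1 + a2) -> (f <= 1)%N ->
  (f + 1 <= odd (a1 + o + (if b then f else 0)) + odd (a2 + o + (if b then 0 else f)))%N.
Proof.
move=> -> h; case: f => [|[|f]] // _; move: h; rewrite !oddD;
case: (odd a1); case: (odd a2); case: (odd o) => //=.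
Qed.

Theorem lemma2 (R : realFieldType) (n : nat) (x : 'I_n -> R)
  (c1 c2 : 'I_n -> bool) :
  (forall i, 0 <= x i <= 1) ->
  satisfies_check c1 x -> satisfies_check c2 x ->
  generates_cut (check_add c1 c2) x ->
  (1 < #|[set i in nbhd c1 :&: nbhd c2 | ((0 < x i) && (x i < 1))%R]|)%N.
Proof.
move=> hx h1 h2 [V [hV hodd hviol]].
rewrite ltnNge; apply/negP.
set F := [set i in _ | _] => hF.
pose O := [set i | c1 i && c2 i && (1 <= x i)].
pose V1 := V :&: nbhd c1; pose V2 := V :&: nbhd c2.
pose b := ~~ odd (#|V1| + #|O|).
pose P1 := if b then F else set0; pose P2 := if b then set0 else F.
pose U1 := V1 :|: O :|: P1; pose U2 := V2 :|: O :|: P2.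
have hVi : forall i, i \in V -> xorb (c1 i) (c2 i).
  by move=> i /(subsetP hV); rewrite inE.
have mF : forall i, (i \in F) = [&& c1 i, c2 i, 0 < x i & x i < 1].
  by move=> i; rewrite !inE -andbA.
have mU1 : forall i, (i \in U1) = [|| (i \in V) && c1 i, c1 i && c2 i && (1 <= x i) |
     b && (i \in F)].
  move=> i; rewrite /U1 /P1 /V1 /O; case: ifP => hb; rewrite !inE /nbhd ?inE ?orbF ?andbT -?orbA //=.
have mU2 : forall i, (i \in U2) = [|| (i \in V) && c2 i, c1 i && c2 i && (1 <= x i) |
     ~~ b && (i \in F)].
  move=> i; rewrite /U2 /P2 /V2 /O; case: ifP => hb; rewrite !inE /nbhd ?inE ?orbF ?andbT -?orbA //=.
have sU1 : U1 \subset nbhd c1.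
  apply/subsetP => i; rewrite mU1 mF /nbhd inE.
  by case: (c1 i); rewrite /= ?andbF /= ?andbF /= ?andbF.
have sU2 : U2 \subset nbhd c2.
  apply/subsetP => i; rewrite mU2 mF /nbhd inE.
  by case: (c2 i); rewrite /= ?andbF /= ?andbF /= ?andbF.
have B1 := bound hx h1 sU1.
have B2 := bound hx h2 sU2.
have Bv : -1 < \sum_i hh x (nbhd (check_add c1 c2)) V i.
  rewrite -sumg; move: hviol; rewrite /pc_constraint -ltNge => H; lra.
have pw : forall i, hh x (nbhd (check_add c1 c2)) V i <=
   hh x (nbhd c1) U1 i + hh x (nbhd c2) U2 i + ((i \in F : nat)%:R).
  move=> i; rewrite /hh mU1 mU2 mF /nbhd !inE /check_add.
  have := hx i; have := hVi i.
  move: (x i) => y.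
  case: (i \in V); case: (c1 i); case: (c2 i); case: (b) => //= hv;
  case: (ltrP 0 y); case: (lerP 1 y) => /=; move=> *; first [by move: (hv isT) | lra].
have S : \sum_i hh x (nbhd (check_add c1 c2)) V i <=
   \sum_i hh x (nbhd c1) U1 i + \sum_i hh x (nbhd c2) U2 i + #|F|%:R.
  by rewrite card_sumR -!big_split /=; apply: ler_sum => i _.
have cU1 : #|U1| = (#|V1| + #|O| + (if b then #|F| else 0))%N.
  have -> : (if b then #|F| else 0) = (\sum_i (b && (i \in F) : nat))%N.
    case: (b); first by rewrite card_sum.
    by rewrite big1.
  rewrite !card_sum -!big_split /=; apply: eq_bigr => i _.
  rewrite mU1 mF /V1 /O /nbhd !inE.
  have := hVi i; move: (x i) => y.
  case: (i \in V); case: (c1 i); case: (c2 i); case: (b) => //= hv;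
  case: (ltrP 0 y); case: (lerP 1 y) => //=; by move: (hv isT).
have cU2 : #|U2| = (#|V2| + #|O| + (if b then 0 else #|F|))%N.
  have -> : (if b then 0 else #|F|) = (\sum_i (~~ b && (i \in F) : nat))%N.
    case: (b); last by rewrite card_sum.
    by rewrite big1.
  rewrite !card_sum -!big_split /=; apply: eq_bigr => i _.
  rewrite mU2 mF /V2 /O /nbhd !inE.
  have := hVi i; move: (x i) => y.
  case: (i \in V); case: (c1 i); case: (c2 i); case: (b) => //= hv;
  case: (ltrP 0 y); case: (lerP 1 y) => //=; by move: (hv isT).
have cV : #|V| = (#|V1| + #|V2|)%N.
  rewrite !card_sum -!big_split /=; apply: eq_bigr => i _.
  rewrite /V1 /V2 /nbhd !inE.
  have := hVi i.
  case: (i \in V); case: (c1 i); case: (c2 i) => //= hv; by move: (hv isT).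
have P : (#|F| + 1 <= odd #|U1| + odd #|U2|)%N.
  have := @parity #|V1| #|V2| #|O| #|F| b erefl.
  rewrite -cV -cU1 -cU2; exact.
have PR : (#|F|%:R + 1 <= (odd #|U1|)%:R + (odd #|U2|)%:R :> R).
  by rewrite -[1 : R]/(1%:R) -!natrD ler_nat.
clear - B1 B2 Bv S PR.
lra.
Qed.
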